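(* Fix $w,z\in S_n$ and let $\mathcal{L}=\{x\in C_z^\vee:\kappa(x)\ge\kappa(w)\}$. Suppose $\mathcal{L}$ has a maximum element $y_M$ and a minimum element $y_m$ in the inversion table order, and let $J=\{1\le j\le n:\iota_j(y_M)=\iota_j(y_m)+1\}$. If $x\in S_n$ satisfies $\iota(x)=\iota(y_M)-e_j$ for some $j\in J$ (where $e_j$ is the $j$th standard basis vector), then $x\in\mathcal{L}$.
   Context: Permutations are in one-line notation. For $x\in S_n$: inversion table $\iota_k(x)=\#\{i<x^{-1}(k):x(i)>k\}$; code $\kappa_k(x)=\#\{i<x(k):x^{-1}(i)>k\}$. A permutation is determined by its inversion table. Vectors are compared componentwise; the inversion table order on $S_n$ is $x\le y$ iff $\iota(x)\le\iota(y)$. For $z\in S_n$, $C_z^\vee$ is the Boolean sublattice of the inversion table order generated by the elements covered by $z$, namely the set of $x\in S_n$ with $\iota_k(z)-1\le\iota_k(x)\le\iota_k(z)$ for all $k$. *)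

(* Defs.v *)
From mathcomp Require Import all_boot all_order all_fingroup.
Set Implicit Arguments. Unset Strict Implicit. Unset Printing Implicit Defensive.

(* Permutations of S_n are elements of 'S_n = {perm 'I_n}; values are
   0-based (k : 'I_n stands for k+1). One-line notation: x i is x(i). *)

Definition inv_table n (x : 'S_n) (k : 'I_n) : nat :=
  #|[set i : 'I_n | (i < (x^-1)%g k) && (k < x i)]|.

Definition code n (x : 'S_n) (k : 'I_n) : nat :=
  #|[set i : 'I_n | (i < x k) && (k < (x^-1)%g i)]|.

Definition it_le n (x y : 'S_n) : Prop :=
  forall k, inv_table x k <= inv_table y k.

Definition Cvee n (z : 'S_n) : {set 'S_n} :=
  [set x : 'S_n | [forall k, (inv_table z k <= (inv_table x k).+1)
                            && (inv_table x k <= inv_table z k)]].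

Definition Lset n (w z : 'S_n) : {set 'S_n} :=
  [set x in Cvee z | [forall k, code w k <= code x k]].

Definition is_max_it n (A : {set 'S_n}) (y : 'S_n) : Prop :=
  y \in A /\ forall x, x \in A -> it_le x y.
Definition is_min_it n (A : {set 'S_n}) (y : 'S_n) : Prop :=
  y \in A /\ forall x, x \in A -> it_le y x.

(* Main.v *)
Require Import Defs.
From mathcomp Require Import all_boot all_order all_fingroup.
From mathcomp Require Import zify.
Set Implicit Arguments. Unset Strict Implicit. Unset Printing Implicit Defensive.

Definition Mc n (y : 'S_n) (t P : nat) := #|[set i : 'I_n | (i < P) && (y i < t)]|.
Definition Gc n (y : 'S_n) (t P : nat) := #|[set i : 'I_n | (i < P) && (t < y i)]|.

Lemma card_step n (Q : pred 'I_n) P (hP : P < n) :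
  #|[set i : 'I_n | (i < P.+1) && Q i]| = #|[set i : 'I_n | (i < P) && Q i]| + Q (Ordinal hP).
Proof.
case hQ: (Q (Ordinal hP)).
  rewrite (_ : [set i : 'I_n | (i < P.+1) && Q i] = Ordinal hP |: [set i : 'I_n | (i < P) && Q i]).
    by rewrite cardsU1 inE /= ltnn /= addnC.
  apply/setP => i; rewrite !inE ltnS leq_eqVlt.
  case: (eqVneq i (Ordinal hP)) => [->|ne] /=; first by rewrite eqxx hQ.
  by rewrite (_ : (i == P :> nat) = false) //; apply/negbTE; move: ne; apply: contra => /eqP e; apply/eqP/val_inj.
rewrite addn0; apply: eq_card => i; rewrite !inE ltnS leq_eqVlt.
case: (eqVneq i (Ordinal hP)) => [->|ne] /=; first by rewrite eqxx hQ ltnn.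
by rewrite (_ : (i == P :> nat) = false) //; apply/negbTE; move: ne; apply: contra => /eqP e; apply/eqP/val_inj.
Qed.

Lemma Mc_succ n (y : 'S_n) (t : 'I_n) P :
  Mc y t.+1 P = Mc y t P + ((y^-1)%g t < P).
Proof.
rewrite /Mc.
case hQ: ((y^-1)%g t < P).
  rewrite (_ : [set i : 'I_n | (i < P) && (y i < t.+1)] = (y^-1)%g t |: [set i : 'I_n | (i < P) && (y i < t)]).
    by rewrite cardsU1 inE /= permKV ltnn andbF addnC.
  apply/setP => i; rewrite !inE ltnS (leq_eqVlt (y i)).
  case: (eqVneq i ((y^-1)%g t)) => [->|ne] /=; first by rewrite hQ permKV eqxx.
  rewrite (_ : (y i == t :> nat) = false) //; apply/negbTE; move: ne; apply: contra => /eqP e.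
  by apply/eqP; rewrite -(permK y i); congr (_ _); apply/val_inj.
rewrite addn0; apply: eq_card => i; rewrite !inE ltnS (leq_eqVlt (y i)).
case: (eqVneq i ((y^-1)%g t)) => [->|ne] /=; first by rewrite hQ.
rewrite (_ : (y i == t :> nat) = false) //; apply/negbTE; move: ne; apply: contra => /eqP e.
by apply/eqP; rewrite -(permK y i); congr (_ _); apply/val_inj.
Qed.

Lemma part n (y : 'S_n) (t : 'I_n) P : P <= n ->
  Gc y t P + Mc y t P + ((y^-1)%g t < P) = P.
Proof.
elim: P => [|P IH] hP.
  rewrite /Gc /Mc !(_ : forall Q : pred 'I_n, #|[set i : 'I_n | (i < 0) && Q i]| = 0) //.
  by move=> Q; apply/eqP; rewrite cards_eq0; apply/eqP/setP => i; rewrite !inE.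
rewrite /Gc /Mc (card_step (fun i => t < y i) hP) (card_step (fun i => y i < t) hP).
rewrite -/(Gc y t P) -/(Mc y t P).
have := IH (ltnW hP).
rewrite ltnS (leq_eqVlt ((y^-1)%g t)) /=.
have e : ((y^-1)%g t == P :> nat) = (y (Ordinal hP) == t).
  apply/eqP/eqP => [e|e].
    by rewrite -(permKV y t); congr (y _); apply/val_inj.
  by rewrite -e permK.
rewrite e.
case: (ltngtP t (y (Ordinal hP))) => h.
- have : y (Ordinal hP) != t by rewrite neq_ltn h orbT.
  move/negbTE => ->; lia.
- have : y (Ordinal hP) != t by rewrite neq_ltn h.
  move/negbTE => ->; lia.
- have ht : y (Ordinal hP) == t by apply/eqP/val_inj.
  rewrite ht /=. lia.
Qed.

Lemma Gc_mono n (y : 'S_n) (t : nat) P P' : P <= P' -> Gc y t P <= Gc y t P'.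
Proof.
move=> h; apply: subset_leq_card; apply/subsetP => i; rewrite !inE => /andP[a b].
by rewrite b (leq_trans a h).
Qed.

Lemma char n (y : 'S_n) (t : 'I_n) P : P <= n ->
  ((y^-1)%g t < P) = (inv_table y t + Mc y t P < P).
Proof.
move=> hP; have hp := part y t hP.
have -> : inv_table y t = Gc y t ((y^-1)%g t) by [].
case: ltnP => h.
  have := Gc_mono y t (ltnW h); move: hp; rewrite h /=; lia.
have := Gc_mono y t h; move: hp; rewrite ltnNge h /=. lia.
Qed.

Lemma Mc0 n (y : 'S_n) P : Mc y 0 P = 0.
Proof. by apply/eqP; rewrite cards_eq0; apply/eqP/setP => i; rewrite !inE ltn0 andbF. Qed.

Lemma Lmono n (a b : 'S_n) d : (forall v, inv_table a v <= inv_table b v + d) ->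
  forall t, t <= n -> forall P, P + d <= n -> Mc b t P <= Mc a t (P + d).
Proof.
move=> H; elim=> [|t IH] ht P hP; first by rewrite Mc0.
have ht' : t < n by [].
have IH' := IH (ltnW ht) P hP.
have -> : t = Ordinal ht' by [].
rewrite !Mc_succ (char b _ (leq_trans (leq_addr _ _) hP)) (char a _ hP) /=.
have := H (Ordinal ht'); move: IH'.
case: ltnP; case: ltnP; lia.
Qed.

Lemma inv_table_inj n (a b : 'S_n) : (forall v, inv_table a v = inv_table b v) -> a = b.
Proof.
move=> H.
have E : forall t, t <= n -> forall P, P <= n -> Mc a t P = Mc b t P.
  move=> t ht P hP; apply/eqP; rewrite eqn_leq.
  have Ha : forall v, inv_table a v <= inv_table b v + 0 by move=> v; rewrite H addn0.
  have Hb : forall v, inv_table b v <= inv_table a v + 0 by move=> v; rewrite H addn0.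
  have h1 := @Lmono n a b 0 Ha t ht P.
  have h2 := @Lmono n b a 0 Hb t ht P.
  by rewrite addn0 in h1 h2; rewrite h1 ?h2 ?addn0.
have Ep : forall v, (a^-1)%g v = (b^-1)%g v.
  move=> v.
  have Ev : forall P, P <= n -> ((a^-1)%g v < P) = ((b^-1)%g v < P).
    move=> P hP; have := E v.+1 (ltn_ord v) P hP; rewrite !Mc_succ E ?(ltnW (ltn_ord v)) //.
    by case: ltnP; case: ltnP => //= ? ? ?; lia.
  apply/val_inj/eqP; rewrite eqn_leq.
  have h1 := Ev ((a^-1)%g v).+1 (ltn_ord _); have h2 := Ev ((b^-1)%g v).+1 (ltn_ord _).
  rewrite ltnSn in h1; rewrite ltnSn in h2.
  move: h1 h2; rewrite !ltnS => h1 h2; by rewrite h2 -h1.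
have : (a^-1 = b^-1)%g by apply/permP => w0; exact: Ep.
by move/(congr1 (fun s => s^-1)%g); rewrite !invgK.
Qed.

Lemma Ksplit n (y : 'S_n) (t p : nat) :
  #|[set u : 'I_n | (u < t) && (p < (y^-1)%g u)]| + Mc y t p.+1 = #|[set u : 'I_n | u < t]|.
Proof.
have -> : Mc y t p.+1 = #|[set u : 'I_n | (u < t) && ((y^-1)%g u <= p)]|.
  rewrite /Mc; apply/esym; rewrite -(card_preimset _ (@perm_inj _ y)); apply: eq_card => i.
  by rewrite !inE permK ltnS andbC.
rewrite -(cardsID [set u : 'I_n | p < (y^-1)%g u] [set u : 'I_n | u < t]).
congr (_ + _); apply: eq_card => u; rewrite !inE.
  by []. by rewrite -leqNgt andbC.
Qed.

Lemma code_at_j n (x y : 'S_n) (j : 'I_n) :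
  (forall k, inv_table y k <= inv_table x k) ->
  (forall k, inv_table x k <= (inv_table y k).+1) ->
  inv_table x j = inv_table y j ->
  code y ((x^-1)%g j) <= code x ((x^-1)%g j).
Proof.
move=> H1 H2 Hj.
set p := (x^-1)%g j.
have xp : x p = j by rewrite /p permKV.
have hp1 : p.+1 <= n := ltn_ord p.
have H1' : forall v, inv_table y v <= inv_table x v + 0 by move=> v; rewrite addn0.
have H2' : forall v, inv_table x v <= inv_table y v + 1 by move=> v; rewrite addn1.
have A1 := @Lmono n y x 0 H1' j (ltnW (ltn_ord j)) p.
have A2 := @Lmono n x y 1 H2' j (ltnW (ltn_ord j)) p.
rewrite !addn0 in A1; rewrite !addn1 in A2.
have A1' := A1 (ltnW hp1); have A2' := A2 hp1.
have A3 : Mc x j p.+1 = Mc x j p.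
  rewrite /Mc (card_step (fun i => x i < j) (ltn_ord p)).
  have -> : Ordinal (ltn_ord p) = p by apply/val_inj.
  by rewrite /= xp ltnn addn0.
have C1 := char x j hp1; have C2 := char x j (ltnW hp1).
rewrite -/p ltnSn ltnn in C1 C2.
have ypj : y p <= j.
  case: (leqP (y p) j) => // hgt.
  have B3 : Mc y j p.+1 = Mc y j p.
    rewrite /Mc (card_step (fun i => y i < j) (ltn_ord p)).
    have -> : Ordinal (ltn_ord p) = p by apply/val_inj.
    by rewrite /= ltnNge (ltnW hgt) addn0.
  have C3 := char y j hp1; have C4 := char y j (ltnW hp1).
  have e : (y^-1)%g j = p.
    have Emm : Mc y j p = Mc x j p by lia.
    rewrite A3 in C1.
    move: C3 C4; rewrite B3 -Hj Emm -C1 -C2 => h3 h4.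
    by apply/val_inj/eqP; rewrite eqn_leq -ltnS h3 leqNgt h4.
  move: hgt; rewrite -e permKV ltnn //.
have L0 : forall v, inv_table y v <= inv_table x v + 0 := H1'.
have A4 := @Lmono n y x 0 L0 j (ltnW (ltn_ord j)) p.+1.
rewrite !addn0 in A4; have A4' := A4 hp1.
have K1 := Ksplit y j p; have K2 := Ksplit x j p.
apply: (@leq_trans #|[set u : 'I_n | (u < j) && (p < (y^-1)%g u)]|).
  apply: subset_leq_card; apply/subsetP => u; rewrite !inE => /andP[a b].
  by rewrite b (leq_trans a ypj).
rewrite /code xp -/p; lia.
Qed.

Lemma ord_neq n (a b : 'I_n) : (a : nat) <> b -> a != b.
Proof. by move=> h; apply/eqP => e; apply: h; rewrite e. Qed.

Lemma core n (ym yM x : 'S_n) (j : 'I_n) :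
  (forall k, inv_table ym k <= inv_table yM k) ->
  (forall k, inv_table yM k <= (inv_table ym k).+1) ->
  inv_table yM j = (inv_table ym j).+1 ->
  (forall k, inv_table x k + (k == j) = inv_table yM k) ->
  forall k, code yM k <= code x k \/ code ym k <= code x k.
Proof.
move=> Hle Hbox Hj Hx.
have Hx1 : forall k, inv_table ym k <= inv_table x k.
  move=> k; have := Hx k; have := Hle k; have := Hbox k.
  by case: (eqVneq k j) => [->|_] /=; lia.
have Hx2 : forall k, inv_table x k <= (inv_table ym k).+1.
  move=> k; have := Hx k; have := Hle k; have := Hbox k.
  by case: (eqVneq k j) => [->|_] /=; lia.
have Hxj : inv_table x j = inv_table ym j by have := Hx j; rewrite eqxx; lia.
set q := (yM^-1)%g j.
have yq : yM q = j by rewrite /q permKV.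
have : 0 < #|[set i : 'I_n | (i < q) && (j < yM i)]|.
  by have := Hx j; rewrite /inv_table -/q eqxx addn1 => <-.
move/card_gt0P => [i0]; rewrite inE => Hi0.
case: (@arg_maxnP _ i0 (fun i : 'I_n => (i < q) && (j < yM i)) (fun i : 'I_n => (i : nat)) Hi0) => p /andP[pq jp] pmax.
have btw : forall i : 'I_n, p < i -> i < q -> yM i < j.
  move=> i h1 h2; case: (ltngtP (yM i) j) => // h.
  - by have := pmax i; rewrite h2 h /= => /(_ isT); lia.
  - have e : yM i = j by apply/val_inj.
    have : i = q by rewrite /q -e permK.
    by move=> ei; rewrite ei ltnn in h2.
set m := yM p.
set x' := (tperm p q * yM)%g.
have x'E : forall i, x' i = yM (tperm p q i) by move=> i; rewrite permM.
have x'iE : forall v, (x'^-1)%g v = tperm p q ((yM^-1)%g v).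
  by move=> v; rewrite /x' invMg tpermV permM.
have pnq : p != q by apply: ord_neq; lia.
have qpF : (q < p) = false by apply/negbTE; rewrite -leqNgt ltnW.
have Ix' : forall v, inv_table x' v + (v == j) = inv_table yM v.
  move=> v; rewrite /inv_table x'iE.
  case: (eqVneq ((yM^-1)%g v) q) => [eq|nq].
    have vj : v = j by rewrite -(permKV yM v) eq yq.
    subst v; rewrite eq tpermR eqxx addn1.
    rewrite (_ : [set i : 'I_n | (i < q) && (j < yM i)] = p |: [set i : 'I_n | (i < p) && (j < x' i)]).
      by rewrite cardsU1 inE ltnn /= add1n.
    apply/setP => i; rewrite !inE x'E.
    case: (eqVneq i p) => [->|nip] /=; first by rewrite pq jp.
    case: (eqVneq i q) => [->|niq] /=; first by rewrite ltnn qpF.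
    rewrite tpermD; [|by rewrite eq_sym|by rewrite eq_sym].
    case: (ltngtP i p) => hip.
    - by rewrite (ltn_trans hip pq).
    - by apply/negbTE/negP => /andP[a b]; have := btw i hip a; lia.
    - by move: nip; rewrite (_ : i = p) ?eqxx //; apply/val_inj.
  have vnj : (v == j) = false.
    apply/negbTE; apply/eqP => e; move: nq; rewrite e -/q eqxx //.
  rewrite vnj addn0.
  case: (eqVneq ((yM^-1)%g v) p) => [ep|np].
    have vm : v = m by rewrite /m -ep permKV.
    rewrite ep tpermL; apply: eq_card => i; rewrite !inE x'E.
    case: (eqVneq i p) => [->|nip] /=; first by rewrite pq tpermL yq vm /m ltnNge (ltnW jp) ltnn.
    case: (eqVneq i q) => [->|niq] /=; first by rewrite ltnn qpF.
    rewrite tpermD; [|by rewrite eq_sym|by rewrite eq_sym].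
    case: (ltngtP i p) => hip.
    - by rewrite (ltn_trans hip pq).
    - apply/negbTE/negP => /andP[a b]; have := btw i hip a; move: b; rewrite vm /m; lia.
    - by move: nip; rewrite (_ : i = p) ?eqxx //; apply/val_inj.
  set r := (yM^-1)%g v.
  have yr : yM r = v by rewrite /r permKV.
  rewrite tpermD; [|by rewrite eq_sym|by rewrite eq_sym].
  case: (ltngtP r p) => hrp.
  - apply: eq_card => i; rewrite !inE x'E.
    case: (ltnP i r) => hir //=.
    rewrite tpermD //; apply: ord_neq; lia.
  - case: (ltngtP r q) => hrq.
    + have vj : v < j by rewrite -yr; apply: btw.
      apply: eq_card => i; rewrite !inE x'E.
      case: (ltnP i r) => hir //=.
      case: (eqVneq i p) => [->|nip]; first by rewrite tpermL yq vj (ltn_trans vj jp).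
      rewrite tpermD //; [by rewrite eq_sym | apply: ord_neq; lia].
    + rewrite -(card_preimset [set i : 'I_n | (i < r) && (v < yM i)] (@perm_inj _ (tperm p q))).
      apply: eq_card => i; rewrite !inE x'E.
      case: (eqVneq i p) => [->|nip]; first by rewrite tpermL hrq (ltn_trans pq hrq).
      case: (eqVneq i q) => [->|niq]; first by rewrite tpermR hrq (ltn_trans pq hrq).
      by rewrite tpermD; [|by rewrite eq_sym|by rewrite eq_sym].
    + by move: nq; rewrite -/r (_ : r = q) ?eqxx //; apply/val_inj.
  - by move: np; rewrite -/r (_ : r = p) ?eqxx //; apply/val_inj.

have ex : x = x'.
  apply: inv_table_inj => v; have := Hx v; have := Ix' v; lia.
move=> k; case: (eqVneq k p) => [->|nkp].
  right.
  have <- : (x^-1)%g j = p by rewrite ex x'iE -/q tpermR.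
  exact: code_at_j.
left; rewrite ex.
case: (eqVneq k q) => [->|nkq].
  apply: subset_leq_card; apply/subsetP => u; rewrite !inE x'E x'iE tpermR => /andP[a b].
  rewrite tpermD; [| apply: ord_neq; lia | apply: ord_neq; lia].
  by rewrite b andbT; rewrite yq in a; apply: ltn_trans a jp.
apply: eq_leq; apply: eq_card => u; rewrite !inE x'E x'iE.
rewrite [tperm p q k]tpermD; [|by rewrite eq_sym|by rewrite eq_sym].
have Fl : forall a b : nat, b <= a -> (a < b) = false.
  by move=> a b h; apply/negbTE; rewrite -leqNgt.
case: (eqVneq ((yM^-1)%g u) p) => [e|n1].
  rewrite e tpermL.
  have um : u = m by rewrite /m -e permKV.
  case: (ltngtP k p) => hkp.
  - by rewrite (ltn_trans hkp pq).
  - case: (ltngtP k q) => hkq.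
    + have h := btw k hkp hkq.
      by rewrite um /m Fl //; apply: ltnW; apply: ltn_trans h jp.
    + by rewrite ?andbF.
    + by move: nkq; rewrite (_ : k = q) ?eqxx //; apply/val_inj.
  - by move: nkp; rewrite (_ : k = p) ?eqxx //; apply/val_inj.
case: (eqVneq ((yM^-1)%g u) q) => [e|n2].
  rewrite e tpermR.
  have uj : u = j by rewrite -(permKV yM u) e yq.
  case: (ltngtP k p) => hkp.
  - by rewrite (ltn_trans hkp pq) ?hkp.
  - case: (ltngtP k q) => hkq.
    + have h := btw k hkp hkq.
      by rewrite uj Fl ?(ltnW h) // andbF.
    + by rewrite ?andbF.
    + by move: nkq; rewrite (_ : k = q) ?eqxx //; apply/val_inj.
  - by move: nkp; rewrite (_ : k = p) ?eqxx //; apply/val_inj.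
by rewrite tpermD; [|by rewrite eq_sym|by rewrite eq_sym].
Qed.

Theorem lemma5p3 (n : nat) (w z yM ym x : 'S_n) (j : 'I_n) :
  is_max_it (Lset w z) yM ->
  is_min_it (Lset w z) ym ->
  inv_table yM j = (inv_table ym j).+1 ->
  (forall k : 'I_n, inv_table x k + (k == j) = inv_table yM k) ->
  x \in Lset w z.
Proof.
move=> [yML Hmax] [ymL Hmin] Hj Hx.
have Hle : forall k, inv_table ym k <= inv_table yM k := Hmin yM yML.
move: yML ymL; rewrite !inE => /andP[yMc yMw] /andP[ymc ymw].
move/forallP: yMc => yMc; move/forallP: ymc => ymc.
move/forallP: yMw => yMw; move/forallP: ymw => ymw.
have Hbox : forall k, inv_table yM k <= (inv_table ym k).+1.
  move=> k; have := yMc k; have := ymc k; move=> /andP[a b] /andP[c d]; lia.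
apply/andP; split.
  apply/forallP => k; have := Hx k; have := yMc k; have := ymc k; have := Hle k.
  case: (eqVneq k j) => [->|_] /= ; move=> h1 /andP[a b] /andP[c d]; lia.
apply/forallP => k; case: (core Hle Hbox Hj Hx k) => h.
  exact: leq_trans (yMw k) h.
exact: leq_trans (ymw k) h.
Qed.
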